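(* Let $t\geq 2$ and $n\geq 1$ be integers and let $\mathcal{F}\subseteq[t]^n$ be a family for which every coordinate $i\in[n]$ is separating. Then $|\mathcal{F}|=\Omega(\sqrt{n})$.
   Context: For positive integers $n,t$, $[n]=\{1,\dots,n\}$ and $[t]^n$ is the set of functions $f:[n]\to[t]$, partially ordered by $f\leq g$ iff $f(i)\leq g(i)$ for all $i$. For $f\in[t]^n$ and $i\in[n]$, $D_i(f)\in[t]^{n-1}$ is the function obtained by deleting coordinate $i$: $D_i(f)(x)=f(x)$ for $1\leq x<i$ and $D_i(f)(x)=f(x+1)$ for $i\leq x\leq n-1$. A coordinate $i\in[n]$ is separating for $\mathcal{F}\subseteq[t]^n$ if there exist distinct $f,f'\in\mathcal{F}$ with $D_i(f)\leq D_i(f')$ and $f(i)>f'(i)$. *)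

(* Defs.v *)
From mathcomp Require Import all_boot all_order.
Set Implicit Arguments. Unset Strict Implicit. Unset Printing Implicit Defensive.

(* [t]^n is modelled as {ffun 'I_n -> 'I_t}: coordinates 1..n are the
   ordinals 0..n-1 and values 1..t are the ordinals 0..t-1 (an order-
   preserving shift by one). *)

(* D_i(f) <= D_i(f') : the pointwise order of the functions with coordinate
   i deleted, i.e. f j <= f' j for every coordinate j other than i. *)
Definition del_le (n t : nat) (i : 'I_n) (f f' : {ffun 'I_n -> 'I_t}) : bool :=
  [forall j : 'I_n, (j != i) ==> (f j <= f' j)].

Definition separating (n t : nat) (F : {set {ffun 'I_n -> 'I_t}}) (i : 'I_n) : Prop :=
  exists f f', [/\ f \in F, f' \in F, f != f', del_le i f f' & f' i < f i].

(* Main.v *)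
Require Import Defs.
From mathcomp Require Import all_boot all_order.

Theorem mainTheorem8 :
  exists c : nat, 0 < c /\
    forall (t n : nat) (F : {set {ffun 'I_n -> 'I_t}}),
      2 <= t -> 1 <= n ->
      (forall i : 'I_n, separating F i) ->
      n <= c * #|F| ^ 2.
Proof.
exists 1; split => // t n F _ _ Hsep.
pose P (i : 'I_n) (p : {ffun 'I_n -> 'I_t} * {ffun 'I_n -> 'I_t}) :=
  [&& p.1 \in F, p.2 \in F, del_le i p.1 p.2 & p.2 i < p.1 i].
pose g i := [pick p | P i p].
have gS i : exists2 p, g i = Some p & P i p.
  rewrite /g; case: pickP => [p Hp|H]; first by exists p.
  have [f [f' [H1 H2 _ H4 H5]]] := Hsep i.
  by have := H (f, f'); rewrite /P /= H1 H2 H4 H5.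
have ginj : injective g.
  move=> i j Eij; apply/eqP; apply/negPn/negP => nij.
  have [p gi Pi] := gS i; have [q gj Pj] := gS j.
  move: Eij; rewrite gi gj => -[Epq]; subst q.
  case/and4P: Pi => _ _ /forallP /(_ j) + _.
  rewrite eq_sym nij /= => Hle.
  case/and4P: Pj => _ _ _ Hlt.
  by move: (leq_trans Hlt Hle); rewrite ltnn.
have sub : g @: setT \subset Some @: setX F F.
  apply/subsetP => x /imsetP [i _ ->].
  have [p -> /and4P [H1 H2 _ _]] := gS i.
  by apply/imsetP; exists p => //; case: p H1 H2 => a b H1 H2; rewrite in_setX H1 H2.
have := subset_leq_card sub.
rewrite card_imset // cardsT card_ord card_imset; last by move=> ? ? [].
by rewrite cardsX mul1n expnS expn1.
Qed.
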